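(* Let $X=\bigcup_{w\in W}V_w$. The translates $\lambda+X$, $\lambda\in\Lambda$, are pairwise disjoint.
   Context: $V$ is a finite-dimensional real Euclidean space, $W$ an irreducible Weyl group acting linearly on $V$ with simple roots $\alpha_1,\dots,\alpha_l$, highest root $\alpha_{\max}$, $\alpha_0:=-\alpha_{\max}$, $\alpha^\vee=2\alpha/\langle\alpha,\alpha\rangle$. $\Lambda=\mathbb Z[\alpha_1^\vee,\dots,\alpha_l^\vee]$ is the coroot lattice. Alcove $A=\{x\mid\langle\alpha_i,x\rangle+\delta_{i,0}>0,\ i=0,\dots,l\}$. For $w\in W$, $V_w=(\mathrm{id}-w)(A)=\{x-w(x)\mid x\in A\}$. *)

(* Defs.v *)
From HB Require Import structures.
From mathcomp Require Import all_boot all_order all_algebra.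
Set Implicit Arguments. Unset Strict Implicit. Unset Printing Implicit Defensive.
Import Order.TTheory GRing.Theory Num.Theory.
Local Open Scope ring_scope.

Section RootData.
Variables (R : realFieldType) (n : nat).
Local Notation V := 'rV[R]_n.

Definition dot (u v : V) : R := (u *m v^T) 0 0.

Definition coroot (a : V) : V := (2 / dot a a) *: a.

Definition refl (a : V) (x : V) : V := x - dot (coroot a) x *: a.

Definition is_root_system (Phi : seq V) : Prop :=
  [/\ (0 : V) \notin Phi,
      (forall a b, a \in Phi -> b \in Phi -> refl a b \in Phi),
      (forall a b, a \in Phi -> b \in Phi ->
         exists z : int, dot (coroot a) b = z%:~R) &
      (forall a (c : R), a \in Phi -> c *: a \in Phi -> c = 1 \/ c = -1)].

Definition irreducible_rs (Phi : seq V) : Prop :=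
  forall P : pred V,
    (exists2 a, a \in Phi & P a) -> (exists2 b, b \in Phi & ~~ P b) ->
    exists a b, [/\ a \in Phi, b \in Phi, P a, ~~ P b & dot a b != 0].

Definition simple_roots (Phi : seq V) (alpha : 'I_n -> V) : Prop :=
  [/\ (forall i, alpha i \in Phi),
      row_free (\matrix_(i < n) alpha i) &
      (forall b, b \in Phi -> exists c : 'I_n -> int,
          b = \sum_(i < n) alpha i *~ c i /\
          ((forall i, 0 <= c i) \/ (forall i, c i <= 0)))].

Definition highest_root (Phi : seq V) (alpha : 'I_n -> V) (amax : V) : Prop :=
  amax \in Phi /\
  forall b, b \in Phi -> exists c : 'I_n -> int,
    (forall i, 0 <= c i) /\ amax - b = \sum_(i < n) alpha i *~ c i.

Definition weyl_act (s : seq V) (x : V) : V := foldr refl x s.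

Definition in_weyl (Phi : seq V) (w : V -> V) : Prop :=
  exists2 s : seq V, all (fun a => a \in Phi) s & w =1 weyl_act s.

Definition in_coroot_lattice (alpha : 'I_n -> V) (lam : V) : Prop :=
  exists k : 'I_n -> int, lam = \sum_(i < n) coroot (alpha i) *~ k i.

(* fundamental alcove A (with alpha_0 = - amax) *)
Definition in_alcove (alpha : 'I_n -> V) (amax : V) (x : V) : Prop :=
  (forall i, 0 < dot (alpha i) x) /\ 0 < dot (- amax) x + 1.

Definition in_Vw (alpha : 'I_n -> V) (amax : V) (w : V -> V) (y : V) : Prop :=
  exists2 x, in_alcove alpha amax x & y = x - w x.

Definition in_X (Phi : seq V) (alpha : 'I_n -> V) (amax : V) (y : V) : Prop :=
  exists2 w, in_weyl Phi w & in_Vw alpha amax w y.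

End RootData.

(* Main.v *)
Require Import Defs.
From HB Require Import structures.
From mathcomp Require Import all_boot all_order all_algebra.
Set Implicit Arguments. Unset Strict Implicit. Unset Printing Implicit Defensive.
Import Order.TTheory GRing.Theory Num.Theory.
Local Open Scope ring_scope.

Section Dot.
Variables (R : realFieldType) (n : nat).
Local Notation V := 'rV[R]_n.
Local Notation dot := (@dot R n).

Lemma dotE (u v : V) : dot u v = \sum_j u 0 j * v 0 j.
Proof. by rewrite /Defs.dot mxE; apply: eq_bigr => j _; rewrite mxE. Qed.

Lemma dotC (u v : V) : dot u v = dot v u.
Proof. by rewrite !dotE; apply: eq_bigr => j _; rewrite mulrC. Qed.

Lemma dotDl (u v w : V) : dot (u + v) w = dot u w + dot v w.
Proof. by rewrite !dotE -big_split; apply: eq_bigr => j _; rewrite mxE mulrDl. Qed.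

Lemma dotZl a (u w : V) : dot (a *: u) w = a * dot u w.
Proof. by rewrite !dotE mulr_sumr; apply: eq_bigr => j _; rewrite mxE mulrA. Qed.

Lemma dotNl (u w : V) : dot (- u) w = - dot u w.
Proof. by rewrite -scaleN1r dotZl mulN1r. Qed.

Lemma dotBl (u v w : V) : dot (u - v) w = dot u w - dot v w.
Proof. by rewrite dotDl dotNl. Qed.

Lemma dot0l (w : V) : dot 0 w = 0.
Proof. by rewrite -(scale0r (0:V)) dotZl mul0r. Qed.

Lemma dotDr (u v w : V) : dot w (u + v) = dot w u + dot w v.
Proof. by rewrite dotC dotDl !(dotC w). Qed.
Lemma dotZr a (u w : V) : dot w (a *: u) = a * dot w u.
Proof. by rewrite dotC dotZl dotC. Qed.
Lemma dotNr (u w : V) : dot w (- u) = - dot w u.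
Proof. by rewrite dotC dotNl dotC. Qed.
Lemma dotBr (u v w : V) : dot w (u - v) = dot w u - dot w v.
Proof. by rewrite dotDr dotNr. Qed.
Lemma dot0r (w : V) : dot w 0 = 0.
Proof. by rewrite dotC dot0l. Qed.

Lemma dot_suml I (r : seq I) (F : I -> V) w :
  dot (\sum_(i <- r) F i) w = \sum_(i <- r) dot (F i) w.
Proof.
elim: r => [|a r IH]; first by rewrite !big_nil dot0l.
by rewrite !big_cons dotDl IH.
Qed.
Lemma dot_sumr I (r : seq I) (F : I -> V) w :
  dot w (\sum_(i <- r) F i) = \sum_(i <- r) dot w (F i).
Proof. rewrite dotC dot_suml; apply: eq_bigr => i _; exact: dotC. Qed.

Lemma dotzl (u w : V) (z : int) : dot (u *~ z) w = dot u w *~ z.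
Proof. by rewrite -scaler_int dotZl mulrzl. Qed.

Lemma dot_ge0 (u : V) : 0 <= dot u u.
Proof. by rewrite dotE; apply: sumr_ge0 => j _; rewrite -expr2 sqr_ge0. Qed.

Lemma dot_eq0 (u : V) : (dot u u == 0) = (u == 0).
Proof.
apply/idP/idP; last by move/eqP->; rewrite dot0l.
rewrite dotE psumr_eq0 => [/allP H|j _]; last by rewrite -expr2 sqr_ge0.
apply/eqP/rowP => j; rewrite mxE.
by have := H j (mem_index_enum j); rewrite -expr2 sqrf_eq0 => /eqP.
Qed.

Lemma dot_gt0 (u : V) : u != 0 -> 0 < dot u u.
Proof. by move=> H; rewrite lt_def dot_eq0 H dot_ge0. Qed.

End Dot.

Section Refl.
Variables (R : realFieldType) (n : nat).
Local Notation V := 'rV[R]_n.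
Local Notation dot := (@dot R n).
Local Notation coroot := (@coroot R n).
Local Notation refl := (@refl R n).

Lemma dot_corootl (a u : V) : dot (coroot a) u = 2 / dot a a * dot a u.
Proof. by rewrite /coroot dotZl. Qed.
Lemma dot_corootr (a u : V) : dot u (coroot a) = 2 / dot a a * dot u a.
Proof. by rewrite /coroot dotZr. Qed.

Lemma dot_coroot_self (a : V) : a != 0 -> dot (coroot a) a = 2.
Proof.
move=> nz; rewrite dot_corootl mulfVK //.
by rewrite dot_eq0.
Qed.

Lemma reflD a (u v : V) : refl a (u + v) = refl a u + refl a v.
Proof.
rewrite /Defs.refl dotDr scalerDl opprD !addrA; congr (_ + _).
by rewrite -!addrA; congr (_ + _); rewrite addrC.
Qed.

Lemma reflZ a c (u : V) : refl a (c *: u) = c *: refl a u.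
Proof. by rewrite /Defs.refl dotZr scalerBr scalerA. Qed.

Lemma reflN a (u : V) : refl a (- u) = - refl a u.
Proof. by rewrite -scaleN1r reflZ scaleN1r. Qed.

Lemma reflB a (u v : V) : refl a (u - v) = refl a u - refl a v.
Proof. by rewrite reflD reflN. Qed.

Lemma refl0 a : refl a 0 = 0.
Proof. by rewrite /Defs.refl dot0r scale0r subr0. Qed.

Lemma refl_sum a I (r : seq I) (F : I -> V) :
  refl a (\sum_(i <- r) F i) = \sum_(i <- r) refl a (F i).
Proof.
elim: r => [|b r IH]; first by rewrite !big_nil refl0.
by rewrite !big_cons reflD IH.
Qed.

Lemma refl_self (a : V) : a != 0 -> refl a a = - a.
Proof.
move=> nz; rewrite /Defs.refl dot_coroot_self // scaler_nat.
by rewrite mulr2n opprD addNKr.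
Qed.

Lemma reflK (a : V) : a != 0 -> forall u, refl a (refl a u) = u.
Proof.
move=> nz u; rewrite {2}/Defs.refl reflB reflZ refl_self //.
by rewrite scalerN opprK /Defs.refl subrK.
Qed.

Lemma dot_refl_sym (a u v : V) : dot (refl a u) v = dot u (refl a v).
Proof.
rewrite /Defs.refl dotBl dotBr dotZl dotZr !dot_corootl.
congr (_ - _); rewrite (dotC u a) -!mulrA; congr (_ * _); congr (_ * _).
exact: mulrC.
Qed.

Lemma dot_refl (a u v : V) : a != 0 -> dot (refl a u) (refl a v) = dot u v.
Proof. by move=> nz; rewrite dot_refl_sym reflK. Qed.

Lemma refl_eq0 (a u : V) : a != 0 -> (refl a u == 0) = (u == 0).
Proof.
move=> nz; rewrite -!dot_eq0 dot_refl //.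
Qed.

Lemma coroot_refl (a b : V) : a != 0 -> coroot (refl a b) = refl a (coroot b).
Proof. by move=> nz; rewrite /coroot dot_refl // reflZ. Qed.

Lemma refl_coroot (a b : V) :
  refl a (coroot b) = coroot b - dot a (coroot b) *: coroot a.
Proof.
rewrite /Defs.refl; congr (_ - _).
by rewrite dot_corootl /coroot scalerA mulrC.
Qed.

Lemma refl_conj (a b q : V) : a != 0 ->
  refl (refl a b) (refl a q) = refl a (refl b q).
Proof.
move=> nz; rewrite {1}/Defs.refl coroot_refl // dot_refl //.
by rewrite reflB reflZ.
Qed.

Lemma corootN (a : V) : coroot (- a) = - coroot a.
Proof. by rewrite /coroot dotNl dotNr opprK scalerN. Qed.

Lemma reflNa (a u : V) : refl (- a) u = refl a u.
Proof. by rewrite /Defs.refl corootN dotNl scaleNr scalerN opprK. Qed.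

Lemma coroot_eq0 (a : V) : (coroot a == 0) = (a == 0).
Proof.
apply/idP/idP; last by move/eqP->; rewrite /coroot scaler0.
case: (eqVneq a 0) => // nz.
rewrite /coroot scaler_eq0 (negbTE nz) orbF.
by rewrite mulf_eq0 invr_eq0 dot_eq0 (negbTE nz) orbF pnatr_eq0.
Qed.

End Refl.

Section Weyl.
Variables (R : realFieldType) (n : nat).
Local Notation V := 'rV[R]_n.
Local Notation dot := (@dot R n).
Local Notation coroot := (@coroot R n).
Local Notation refl := (@refl R n).
Local Notation wa := (@weyl_act R n).

Lemma wa_cons a s (x : V) : wa (a :: s) x = refl a (wa s x).
Proof. by []. Qed.
Lemma wa_nil (x : V) : wa [::] x = x.
Proof. by []. Qed.
Lemma wa_cat s1 s2 (x : V) : wa (s1 ++ s2) x = wa s1 (wa s2 x).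
Proof. by rewrite /weyl_act foldr_cat. Qed.
Lemma wa_rcons s a (x : V) : wa (rcons s a) x = wa s (refl a x).
Proof. by rewrite -cats1 wa_cat. Qed.

Lemma waD s (u v : V) : wa s (u + v) = wa s u + wa s v.
Proof. by elim: s => //= a s IH; rewrite IH reflD. Qed.
Lemma waZ s c (u : V) : wa s (c *: u) = c *: wa s u.
Proof. by elim: s => //= a s IH; rewrite IH reflZ. Qed.
Lemma waN s (u : V) : wa s (- u) = - wa s u.
Proof. by rewrite -scaleN1r waZ scaleN1r. Qed.
Lemma waB s (u v : V) : wa s (u - v) = wa s u - wa s v.
Proof. by rewrite waD waN. Qed.
Lemma wa0 s : wa s 0 = 0.
Proof. by elim: s => //= a s IH; rewrite IH refl0. Qed.
Lemma wa_sum s I (r : seq I) (F : I -> V) :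
  wa s (\sum_(i <- r) F i) = \sum_(i <- r) wa s (F i).
Proof.
elim: r => [|b r IH]; first by rewrite !big_nil wa0.
by rewrite !big_cons waD IH.
Qed.

Lemma dot_wa_sym s (u v : V) : dot (wa s u) v = dot u (wa (rev s) v).
Proof.
elim: s u v => //= a s IH u v.
by rewrite dot_refl_sym IH rev_cons wa_rcons.
Qed.

Definition nzl (s : seq V) := all (fun a => a != 0) s.

Lemma waK s (x : V) : nzl s -> wa (rev s) (wa s x) = x.
Proof.
elim: s x => //= a s IH x /andP[nz H].
by rewrite rev_cons wa_rcons reflK // IH.
Qed.

Lemma waKV s (x : V) : nzl s -> wa s (wa (rev s) x) = x.
Proof.
move=> H; have := waK x (s := rev s); rewrite revK; apply.
by rewrite /nzl all_rev.
Qed.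

Lemma dot_wa s (u v : V) : nzl s -> dot (wa s u) (wa s v) = dot u v.
Proof. by move=> H; rewrite dot_wa_sym waK. Qed.

Lemma coroot_wa s (b : V) : nzl s -> coroot (wa s b) = wa s (coroot b).
Proof.
elim: s => //= a s IH /andP[nz H].
by rewrite coroot_refl // IH.
Qed.

Lemma wa_conj s (b q : V) : nzl s -> refl (wa s b) (wa s q) = wa s (refl b q).
Proof.
elim: s => //= a s IH /andP[nz H].
by rewrite refl_conj // IH.
Qed.

Lemma wa_sum_coroot s (g : seq V) : nzl s ->
  wa s (\sum_(t <- g) coroot t) = \sum_(t <- map (wa s) g) coroot t.
Proof.
move=> H; rewrite wa_sum big_map; apply: eq_bigr => t _.
by rewrite coroot_wa.
Qed.

End Weyl.

Section Roots.
Variables (R : realFieldType) (n : nat) (Phi : seq 'rV[R]_n)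
    (alpha : 'I_n -> 'rV[R]_n) (amax : 'rV[R]_n).
Hypothesis HR : is_root_system Phi.
Hypothesis HS : simple_roots Phi alpha.
Hypothesis HH : highest_root Phi alpha amax.
Local Notation V := 'rV[R]_n.
Local Notation dot := (@dot R n).
Local Notation coroot := (@coroot R n).
Local Notation refl := (@refl R n).
Local Notation wa := (@weyl_act R n).
Local Notation inA := (in_alcove alpha amax).

Lemma root_nz b : b \in Phi -> b != 0.
Proof. by case: HR => H0 _ _ _ Hb; apply: contraNneq H0 => <-. Qed.

Lemma refl_Phi a b : a \in Phi -> b \in Phi -> refl a b \in Phi.
Proof. by case: HR => _ H _ _; apply: H. Qed.

Lemma neg_Phi b : b \in Phi -> - b \in Phi.
Proof. by move=> Hb; rewrite -refl_self ?root_nz // refl_Phi. Qed.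

Lemma int_pair a b : a \in Phi -> b \in Phi -> exists z : int, dot (coroot a) b = z%:~R.
Proof. by case: HR => _ _ H _; apply: H. Qed.

Lemma reduced a (c : R) : a \in Phi -> c *: a \in Phi -> c = 1 \/ c = -1.
Proof. by case: HR => _ _ _ H; apply: H. Qed.

Definition inPhi (s : seq V) := all (fun a => a \in Phi) s.

Lemma inPhi_nzl s : inPhi s -> nzl s.
Proof. by move/allP=> H; apply/allP=> a /H; apply: root_nz. Qed.

Lemma wa_Phi s b : inPhi s -> b \in Phi -> wa s b \in Phi.
Proof.
elim: s => //= a s IH /andP[Ha Hs] Hb.
by apply: refl_Phi => //; apply: IH.
Qed.

Lemma inPhi_rev s : inPhi s -> inPhi (rev s).
Proof. by rewrite /inPhi all_rev. Qed.

Lemma inPhi_map s g : inPhi s -> inPhi g -> inPhi (map (wa s) g).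
Proof.
move=> Hs /allP Hg; apply/allP => t /mapP [b Hb ->].
by apply: wa_Phi => //; apply: Hg.
Qed.

Lemma dot_sum_alpha (c : 'I_n -> int) x :
  dot (\sum_(i < n) alpha i *~ c i) x = \sum_(i < n) dot (alpha i) x *~ c i.
Proof. by rewrite dot_suml; apply: eq_bigr => i _; rewrite dotzl. Qed.

Lemma sum_alpha_pos (c : 'I_n -> int) x : inA x -> (forall i, 0 <= c i) ->
  \sum_(i < n) alpha i *~ c i != 0 -> 0 < dot (\sum_(i < n) alpha i *~ c i) x.
Proof.
move=> [Hx _] Hc Hnz; rewrite dot_sum_alpha lt_def.
have H0 : forall i : 'I_n, true -> 0 <= dot (alpha i) x *~ c i.
  by move=> i _; apply: mulrz_ge0 => //; apply: ltW.
rewrite sumr_ge0 // andbT; apply/eqP => Hs.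
move: Hnz; rewrite (eq_bigr (fun _ => 0)) ?big1 ?eqxx // => i _.
have /eqP := @psumr_eq0P _ _ _ _ H0 Hs i isT.
rewrite mulrz_eq0 (negbTE (lt0r_neq0 (Hx i))) orbF => /eqP ->.
by rewrite mulr0z.
Qed.

Lemma sum_alphaN (c : 'I_n -> int) :
  - \sum_(i < n) alpha i *~ c i = \sum_(i < n) alpha i *~ (- c i).
Proof. by rewrite -sumrN; apply: eq_bigr => i _; rewrite mulrNz. Qed.

Lemma root_sign b x : b \in Phi -> inA x ->
  exists2 c : 'I_n -> int, b = \sum_(i < n) alpha i *~ c i &
   ((forall i, 0 <= c i) /\ 0 < dot b x) \/
   ((forall i, c i <= 0) /\ dot b x < 0).
Proof.
move=> Hb Hx; case: HS => _ _ H; have [c [Hbc Hc]] := H b Hb.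
exists c => //; case: Hc => Hc; [left|right]; split => //.
  by rewrite Hbc; apply: sum_alpha_pos => //; rewrite -Hbc root_nz.
have Hb' : - b = \sum_(i < n) alpha i *~ (- c i) by rewrite Hbc sum_alphaN.
have : 0 < dot (- b) x.
  rewrite Hb'; apply: sum_alpha_pos => //.
    by move=> i; rewrite oppr_ge0.
  by rewrite -Hb' oppr_eq0 root_nz.
by rewrite dotNl oppr_gt0.
Qed.

Lemma alc_neq0 b x : b \in Phi -> inA x -> dot b x != 0.
Proof.
move=> Hb Hx; have [c _ [[_ H]|[_ H]]] := root_sign Hb Hx.
  by rewrite gt_eqF. by rewrite lt_eqF.
Qed.

Lemma alc_sign b x y : b \in Phi -> inA x -> inA y -> (0 < dot b x) = (0 < dot b y).
Proof.
move=> Hb Hx Hy; have [c Hbc Hc] := root_sign Hb Hx.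
have [c' Hbc' Hc'] := root_sign Hb Hy.
case: Hc => [[Hc H]|[Hc H]].
  by rewrite H; symmetry; rewrite Hbc; apply: sum_alpha_pos => //; rewrite -Hbc root_nz.
rewrite (lt_gtF H); symmetry; apply/negbTE; rewrite -leNgt.
have Hb' : - b = \sum_(i < n) alpha i *~ (- c i) by rewrite Hbc sum_alphaN.
have : 0 < dot (- b) y.
  rewrite Hb'; apply: sum_alpha_pos => //.
    by move=> i; rewrite oppr_ge0.
  by rewrite -Hb' oppr_eq0 root_nz.
by rewrite dotNl oppr_gt0 => /ltW.
Qed.

Lemma alc_lt1 b x : b \in Phi -> inA x -> dot b x < 1.
Proof.
move=> Hb [Hx Hx0]; case: HH => _ H; have [d [Hd Hbd]] := H b Hb.
have : 0 <= dot (amax - b) x.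
  rewrite Hbd dot_sum_alpha; apply: sumr_ge0 => i _.
  by apply: mulrz_ge0 => //; apply: ltW.
rewrite dotBl subr_ge0 => /le_lt_trans; apply.
by move: Hx0; rewrite dotNl addrC subr_gt0.
Qed.

Lemma alc_abs b x : b \in Phi -> inA x -> -1 < dot b x.
Proof.
move=> Hb Hx; have := alc_lt1 (neg_Phi Hb) Hx.
by rewrite dotNl ltrNl.
Qed.

End Roots.

Section Simple.
Variables (R : realFieldType) (n : nat) (Phi : seq 'rV[R]_n)
    (alpha : 'I_n -> 'rV[R]_n) (amax : 'rV[R]_n).
Hypothesis HR : is_root_system Phi.
Hypothesis HS : simple_roots Phi alpha.
Hypothesis HH : highest_root Phi alpha amax.
Local Notation V := 'rV[R]_n.
Local Notation dot := (@dot R n).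
Local Notation coroot := (@coroot R n).
Local Notation refl := (@refl R n).
Local Notation wa := (@weyl_act R n).
Local Notation inA := (in_alcove alpha amax).

Lemma alpha_Phi i : alpha i \in Phi.
Proof. by case: HS. Qed.

Lemma alpha_indep (c : 'I_n -> int) :
  \sum_(i < n) alpha i *~ c i = 0 -> forall i, c i = 0.
Proof.
move=> H i; case: HS => _ Hf _.
pose r : 'rV[R]_n := \row_(j < n) (c j)%:~R.
have : r *m (\matrix_(j < n) alpha j) = 0 *m (\matrix_(j < n) alpha j).
  rewrite mul0mx mulmx_sum_row -[RHS]H; apply: eq_bigr => j _.
  by rewrite rowK mxE scaler_int.
move/(row_free_inj Hf)/rowP/(_ i); rewrite !mxE => /eqP.
by rewrite intr_eq0 => /eqP.
Qed.

Lemma alpha_uniq (c d : 'I_n -> int) :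
  \sum_(i < n) alpha i *~ c i = \sum_(i < n) alpha i *~ d i -> forall i, c i = d i.
Proof.
move=> H i; apply/eqP; rewrite -subr_eq0; apply/eqP; move: i; apply: alpha_indep.
by rewrite (eq_bigr (fun j => alpha j *~ c j - alpha j *~ d j)) ?sumrB ?H ?subrr // => j _; rewrite mulrzBr.
Qed.

Lemma sum_single (c : 'I_n -> int) i : (forall j, j != i -> c j = 0) ->
  \sum_(j < n) alpha j *~ c j = alpha i *~ c i.
Proof.
move=> H; rewrite (bigD1 i) //= big1 ?addr0 // => j Hj.
by rewrite H // mulr0z.
Qed.

Lemma pos_rep b x : b \in Phi -> inA x -> 0 < dot b x ->
  exists2 c : 'I_n -> int, b = \sum_(i < n) alpha i *~ c i & forall i, 0 <= c i.
Proof.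
move=> Hb Hx Hp; have [c Hbc [[Hc _]|[_ H]]] := root_sign HR HS Hb Hx.
  by exists c.
by move: Hp; rewrite (lt_gtF H).
Qed.

Lemma refl_alpha_eq i b m : dot (coroot (alpha i)) b = m%:~R ->
  refl (alpha i) b = b - alpha i *~ m.
Proof. by move=> H; rewrite /Defs.refl H scaler_int. Qed.

Lemma simple_pos i b x : b \in Phi -> inA x -> 0 < dot b x -> b != alpha i ->
  0 < dot (refl (alpha i) b) x.
Proof.
move=> Hb Hx Hp Hne.
have Hb' : refl (alpha i) b \in Phi by apply: refl_Phi => //; apply: alpha_Phi.
have [c Hbc Hc] := pos_rep Hb Hx Hp.
have [m Hm] := int_pair HR (alpha_Phi i) Hb.
have [d Hbd [[_ H]|[Hd H]]] := root_sign HR HS Hb' Hx => //.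
exfalso; move/negP: Hne; apply.
pose e j := c j - (if j == i then m else 0).
have He : refl (alpha i) b = \sum_(j < n) alpha j *~ e j.
  rewrite (refl_alpha_eq Hm) Hbc.
  rewrite [RHS](eq_bigr (fun j => alpha j *~ c j - alpha j *~ (if j == i then m else 0)));
    last by move=> j _; rewrite /e mulrzBr.
  rewrite sumrB; congr (_ - _).
  by rewrite (@sum_single (fun j => if j == i then m else 0) i) ?eqxx // => j /negbTE ->.
have Hed := alpha_uniq (etrans (esym He) Hbd).
have Hc0 : forall j, j != i -> c j = 0.
  move=> j Hj; apply/eqP; rewrite eq_le Hc andbT.
  by have := Hd j; rewrite -Hed /e (negbTE Hj) subr0.
have Hbi : b = (c i)%:~R *: alpha i by rewrite Hbc (sum_single Hc0) scaler_int.
have Hbi' : (c i)%:~R *: alpha i \in Phi by rewrite -Hbi.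
have [H1|H1] := reduced HR (alpha_Phi i) Hbi'.
  by rewrite Hbi H1 scale1r.
have := Hc i; rewrite -(ler0z R) H1.
by rewrite oppr_ge0 ler10.
Qed.

End Simple.

Section Words.
Variables (R : realFieldType) (n : nat) (Phi : seq 'rV[R]_n)
    (alpha : 'I_n -> 'rV[R]_n) (amax : 'rV[R]_n) (x0 : 'rV[R]_n).
Hypothesis HR : is_root_system Phi.
Hypothesis HS : simple_roots Phi alpha.
Hypothesis HH : highest_root Phi alpha amax.
Hypothesis Hx0 : in_alcove alpha amax x0.
Local Notation V := 'rV[R]_n.
Local Notation dot := (@dot R n).
Local Notation coroot := (@coroot R n).
Local Notation refl := (@refl R n).
Local Notation wa := (@weyl_act R n).
Local Notation inA := (in_alcove alpha amax).

Definition sactw (l : seq 'I_n) (q : V) := wa (map alpha l) q.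

Lemma sact_cons i l q : sactw (i :: l) q = refl (alpha i) (sactw l q).
Proof. by []. Qed.
Lemma sact_cat l1 l2 q : sactw (l1 ++ l2) q = sactw l1 (sactw l2 q).
Proof. by rewrite /sactw map_cat wa_cat. Qed.

Lemma alpha_nz i : alpha i != 0.
Proof. exact: (root_nz HR (alpha_Phi HS i)). Qed.

Lemma refl_conj' (a b q : V) : a != 0 ->
  refl (refl a b) q = refl a (refl b (refl a q)).
Proof. by move=> nz; rewrite -refl_conj // reflK. Qed.

Lemma refl_pos_word N : forall b (c : 'I_n -> int), b \in Phi ->
  b = \sum_(i < n) alpha i *~ c i -> (forall i, 0 <= c i) ->
  \sum_(i < n) c i < N%:Z ->
  exists l : seq 'I_n, forall q, refl b q = sactw l q.
Proof.
elim: N => [|N IH] b c Hb Hbc Hc HN.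
  by move: HN; rewrite ltNge sumr_ge0.
case: (boolP [exists i, b == alpha i]) => [/existsP [i /eqP ->]|Hne].
  by exists [:: i].
have [i Hi] : exists i, 0 < dot (alpha i) b.
  apply/existsP; apply: contraT; rewrite negb_exists => /forallP Hle.
  have : 0 < dot b b by apply: dot_gt0; exact: (root_nz HR Hb).
  rewrite {1}Hbc dot_sum_alpha ltNge => /negP [].
  apply: sumr_le0 => j _; rewrite -oppr_ge0 -mulNrz; apply: mulrz_ge0 => //.
  by rewrite oppr_ge0 leNgt Hle.
have Hbi : b != alpha i by apply: contra Hne => /eqP ->; apply/existsP; exists i.
have [m Hm] := int_pair HR (alpha_Phi HS i) Hb.
have Hm0 : 0 < m.
  by rewrite -(ltr0z R) -Hm dot_corootl mulr_gt0 // divr_gt0 // dot_gt0 // alpha_nz.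
have Hbx : 0 < dot b x0.
  rewrite Hbc; apply: (sum_alpha_pos (amax:=amax)) => //; rewrite -Hbc; exact: (root_nz HR Hb).
have Hb'P : refl (alpha i) b \in Phi by apply: refl_Phi => //; apply: alpha_Phi.
have Hpos := simple_pos HR HS Hb Hx0 Hbx Hbi.
have [d Hbd Hd] := pos_rep HR HS Hb'P Hx0 Hpos.
pose e j := c j - (if j == i then m else 0).
have He : refl (alpha i) b = \sum_(j < n) alpha j *~ e j.
  rewrite (refl_alpha_eq Hm) Hbc.
  rewrite [RHS](eq_bigr (fun j => alpha j *~ c j - alpha j *~ (if j == i then m else 0)));
    last by move=> j _; rewrite /e mulrzBr.
  rewrite sumrB; congr (_ - _).
  by rewrite (@sum_single _ _ alpha (fun j => if j == i then m else 0) i) ?eqxx // => j /negbTE ->.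
have Hed := alpha_uniq HS (etrans (esym Hbd) He).
have [l Hl] : exists l : seq 'I_n, forall q, refl (refl (alpha i) b) q = sactw l q.
  apply: (IH _ d Hb'P Hbd Hd).
  rewrite (eq_bigr e) // /e sumrB -big_mkcond big_pred1_eq.
  rewrite -(ltrD2r m) subrK; apply: lt_le_trans HN _.
  by rewrite -addn1 PoszD lerD2l.
exists (i :: l ++ [:: i]) => q.
have -> : b = refl (alpha i) (refl (alpha i) b) by rewrite reflK // alpha_nz.
by rewrite refl_conj' ?alpha_nz // Hl sact_cons sact_cat.
Qed.

Lemma refl_word b : b \in Phi -> exists l : seq 'I_n, forall q, refl b q = sactw l q.
Proof.
move=> Hb; have [c Hbc [[Hc _]|[Hc _]]] := root_sign HR HS Hb Hx0.
  have Hs : 0 <= \sum_(i < n) c i by apply: sumr_ge0.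
  apply: (refl_pos_word (N := (absz (\sum_(i < n) c i)).+1) Hb Hbc Hc).
  by rewrite -addn1 PoszD abszE ger0_norm // ltrDl.
have Hb' : - b = \sum_(i < n) alpha i *~ (- c i) by rewrite Hbc sum_alphaN.
have Hc' : forall i, 0 <= - c i by move=> i; rewrite oppr_ge0.
have Hs : 0 <= \sum_(i < n) - c i by apply: sumr_ge0.
have [l Hl] := refl_pos_word (N := (absz (\sum_(i < n) - c i)).+1) (neg_Phi HR Hb) Hb' Hc'
  (ltac:(by rewrite -addn1 PoszD abszE ger0_norm // ltrDl)).
by exists l => q; rewrite -reflNa.
Qed.

Lemma wa_word s : inPhi Phi s -> exists l : seq 'I_n, forall q, wa s q = sactw l q.
Proof.
elim: s => [|a s IH] /=; first by exists [::].
move=> /andP[Ha Hs]; have [l1 H1] := refl_word Ha; have [l2 H2] := IH Hs.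
by exists (l1 ++ l2) => q; rewrite sact_cat -H2 -H1.
Qed.

End Words.

Section Chamber.
Variables (R : realFieldType) (n : nat) (Phi : seq 'rV[R]_n)
    (alpha : 'I_n -> 'rV[R]_n) (amax : 'rV[R]_n) (x0 : 'rV[R]_n).
Hypothesis HR : is_root_system Phi.
Hypothesis HS : simple_roots Phi alpha.
Hypothesis HH : highest_root Phi alpha amax.
Hypothesis Hx0 : in_alcove alpha amax x0.
Local Notation V := 'rV[R]_n.
Local Notation dot := (@dot R n).
Local Notation coroot := (@coroot R n).
Local Notation refl := (@refl R n).
Local Notation wa := (@weyl_act R n).
Local Notation inA := (in_alcove alpha amax).
Local Notation sactw := (sactw alpha).

Let anz : forall i, alpha i != 0 := alpha_nz HR HS.

Lemma inPhi_alpha l : inPhi Phi (map alpha l).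
Proof. by apply/allP => a /mapP [i _ ->]; apply: alpha_Phi. Qed.

Lemma sact_Phi l b : b \in Phi -> sactw l b \in Phi.
Proof. by move=> Hb; apply: wa_Phi => //; apply: inPhi_alpha. Qed.

Lemma sact_conj l b q : refl (sactw l b) (sactw l q) = sactw l (refl b q).
Proof. by apply: wa_conj; exact: (inPhi_nzl HR (inPhi_alpha l)). Qed.

Lemma sactN l q : sactw l (- q) = - sactw l q.
Proof. exact: waN. Qed.

Lemma alpha_pos i x : inA x -> 0 < dot (alpha i) x.
Proof. by case. Qed.

Lemma deletion l j : dot (sactw l (alpha j)) x0 < 0 ->
  exists2 l', (size l' < size l)%N & forall q, sactw l' q = sactw l (refl (alpha j) q).
Proof.
elim: l => [|i l0 IH] /= H.
  by move: H; rewrite /sactw /= (lt_gtF (alpha_pos j Hx0)).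
have Hr : sactw l0 (alpha j) \in Phi by apply: sact_Phi; apply: alpha_Phi.
case: (ltP (dot (sactw l0 (alpha j)) x0) 0) => H0.
  have [l0' Hs Hl] := IH H0.
  by exists (i :: l0') => //= q; rewrite sact_cons Hl.
have Hpos : 0 < dot (sactw l0 (alpha j)) x0.
  by rewrite lt_def H0 andbT; exact: (alc_neq0 HR HS Hr Hx0).
have Heq : sactw l0 (alpha j) = alpha i.
  apply/eqP; apply: contraTT H => Hne; rewrite -leNgt ltW //.
  exact: (simple_pos HR HS Hr Hx0 Hpos Hne).
exists l0 => // q.
by rewrite sact_cons -sact_conj Heq reflK // anz.
Qed.

Lemma sact_rcons l j q : sactw (rcons l j) q = sactw l (refl (alpha j) q).
Proof. by rewrite -cats1 sact_cat. Qed.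

Lemma chamber N l : (size l < N)%N -> (forall j, 0 < dot (sactw l (alpha j)) x0) ->
  forall q, sactw l q = q.
Proof.
elim: N l => // N IH l; case/lastP: l => // l0 j.
rewrite size_rcons ltnS => Hsz Hall q.
have Hneg : dot (sactw l0 (alpha j)) x0 < 0.
  by have := Hall j; rewrite sact_rcons refl_self ?anz // sactN dotNl oppr_gt0.
have [l0' Hs Hl] := deletion Hneg.
have Heq : forall q, sactw l0' q = sactw (rcons l0 j) q by move=> q'; rewrite Hl sact_rcons.
rewrite -Heq; apply: IH; first exact: ltn_trans Hs Hsz.
by move=> j'; rewrite Heq.
Qed.

Lemma KW N l : (size l < N)%N -> forall x x', inA x -> inA x' ->
  dot x (sactw l x') <= dot x x'.
Proof.
elim: N l => // N IH l Hsz x x' Hx Hx'.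
case: (boolP [forall j, 0 < dot (sactw l (alpha j)) x0]) => [/forallP Hall|].
  by rewrite (chamber (ltnSn _) Hall).
rewrite negb_forall => /existsP [j Hj].
have Hr : sactw l (alpha j) \in Phi by apply: sact_Phi; apply: alpha_Phi.
have Hneg : dot (sactw l (alpha j)) x0 < 0.
  by rewrite lt_neqAle (alc_neq0 HR HS Hr Hx0) /= leNgt.
have [l' Hs Hl] := deletion Hneg.
have Hl2 : forall q, sactw l q = sactw l' (refl (alpha j) q).
  by move=> q; rewrite Hl reflK // anz.
have Hnegx : dot (sactw l (alpha j)) x < 0.
  have := alc_sign HR HS Hr Hx Hx0; rewrite (lt_gtF Hneg) => /negbT.
  by rewrite -leNgt le_eqVlt (negbTE (alc_neq0 HR HS Hr Hx)).
rewrite Hl2 {1}/Defs.refl /sactw waB waZ dotBr dotZr.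
have -> : wa (map alpha l') (alpha j) = - sactw l (alpha j).
  by rewrite -/(sactw l' (alpha j)) Hl refl_self ?anz // sactN.
apply: le_trans (IH l' _ x x' Hx Hx'); last by rewrite -ltnS; exact: leq_trans Hs Hsz.
rewrite gerBl; apply: mulr_ge0; last by rewrite dotNr dotC oppr_ge0 ltW.
by rewrite dot_corootl mulr_ge0 ?divr_ge0 ?dot_ge0 // ltW // alpha_pos.
Qed.

End Chamber.

Lemma int_neg_prod (a b : int) : a < 0 -> b < 0 -> a * b < 4 -> a = -1 \/ b = -1.
Proof.
case: a => [k|k]; first by rewrite ltNge.
case: b => [k'|k'] _; first by rewrite ltNge.
move=> _; rewrite !NegzE mulrNN -PoszM ltz_nat.
case: k => [|k]; first by left.
case: k' => [|k']; first by right.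
move=> H; exfalso; move: H; rewrite ltnNge => /negP; apply.
by apply: (@leq_mul 2 2).
Qed.

Section Lred.
Variables (R : realFieldType) (n : nat) (Phi : seq 'rV[R]_n).
Hypothesis HR : is_root_system Phi.
Local Notation V := 'rV[R]_n.
Local Notation dot := (@dot R n).
Local Notation coroot := (@coroot R n).
Local Notation refl := (@refl R n).

Lemma strict_cs (h t : V) : h \in Phi -> t \in Phi -> t != - h -> dot h t < 0 ->
  dot h t * dot h t < dot h h * dot t t.
Proof.
move=> Hh Ht Hne Hneg.
have Hnz : dot h h != 0 by rewrite dot_eq0 (root_nz HR Hh).
have HH : 0 < dot h h by apply: dot_gt0; exact: (root_nz HR Hh).
pose c := dot h t / dot h h.
have Hd : t - c *: h != 0.
  apply/negP; rewrite subr_eq0 => /eqP Et.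
  have Hc : c *: h \in Phi by rewrite -Et.
  have [E|E] := reduced HR Hh Hc.
    by move: Hneg; rewrite Et E scale1r lt_gtF.
  by move/negP: Hne; apply; rewrite Et E scaleN1r.
have := dot_gt0 Hd.
rewrite dotBl !dotBr !dotZl !dotZr (dotC t h).
have -> : c * (c * dot h h) = c * dot h t by rewrite /c divfK.
rewrite subrr subr0 subr_gt0 /c mulrAC => H.
by rewrite -(ltr_pM2r HH) divfK // (mulrC (dot t t)) in H.
Qed.

Lemma coroot_sum_step (h t : V) : h \in Phi -> t \in Phi -> t != - h ->
  dot h (coroot t) < 0 ->
  exists2 d, d \in Phi & coroot d = coroot h + coroot t.
Proof.
move=> Hh Ht Hne Hneg.
have HhP : 0 < dot h h by apply: dot_gt0; exact: (root_nz HR Hh).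
have HtP : 0 < dot t t by apply: dot_gt0; exact: (root_nz HR Ht).
have Hht : dot h t < 0.
  by move: Hneg; rewrite dot_corootr pmulr_rlt0 // divr_gt0.
have [a Ha] := int_pair HR Hh Ht.
have [b Hb] := int_pair HR Ht Hh.
have Ha0 : a < 0 by rewrite -(ltrz0 R) -Ha dot_corootl pmulr_rlt0 // divr_gt0.
have Hb0 : b < 0 by rewrite -(ltrz0 R) -Hb dot_corootl (dotC t h) pmulr_rlt0 // divr_gt0.
have Hab : a * b < 4.
  rewrite -(ltr_int R) intrM -Ha -Hb !dot_corootl (dotC t h).
  have Hcs := strict_cs Hh Ht Hne Hht.
  set p := dot h t in Hcs *; set A := dot h h in Hcs HhP *; set T := dot t t in Hcs HtP *.
  have Hk : 0 < 2 / A * (2 / T) by rewrite mulr_gt0 // divr_gt0.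
  have E1 : 2 / A * p * (2 / T * p) = p * p * (2 / A * (2 / T)).
    by rewrite mulrACA mulrC.
  have E2 : A * T * (2 / A * (2 / T)) = (4:int)%:~R.
    rewrite mulrACA (mulrC A) (mulrC T) !divfK ?gt_eqF //.
    by rewrite -natrM.
  by rewrite E1 -E2 ltr_pM2r.
have [E|E] := int_neg_prod Ha0 Hb0 Hab.
  exists (refl t h); first exact: (refl_Phi HR Ht Hh).
  rewrite coroot_refl ?(root_nz HR Ht) // refl_coroot dotC Ha E.
  by rewrite scaleN1r opprK.
exists (refl h t); first exact: (refl_Phi HR Hh Ht).
rewrite coroot_refl ?(root_nz HR Hh) // refl_coroot dotC Hb E.
by rewrite scaleN1r opprK addrC.
Qed.

Definition csum (g : seq V) := \sum_(t <- g) coroot t.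

Lemma good_rep N (g : seq V) : (size g < N)%N -> inPhi Phi g -> csum g != 0 ->
  exists h, exists tl, [/\ inPhi Phi (h :: tl), (size tl < size g)%N,
     csum (h :: tl) = csum g & forall t, t \in tl -> 0 <= dot h (coroot t)].
Proof.
elim: N g => // N IH [|h tl] //=; first by rewrite /csum big_nil eqxx.
rewrite ltnS => Hsz /andP[Hh Htl] Hnz.
case: (boolP (has (fun t => dot h (coroot t) < 0) tl)) => [/hasP [t Ht Hneg]|Hno].
  have Hperm := perm_to_rem Ht.
  have Hsum : csum (h :: tl) = coroot h + coroot t + csum (rem t tl).
    by rewrite /csum big_cons (perm_big _ Hperm) big_cons addrA.
  have HtP : t \in Phi by move/allP: Htl; apply.
  have Hrem : inPhi Phi (rem t tl).
    by apply/allP => u /mem_rem Hu; move/allP: Htl; apply.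
  have Hsr : size (rem t tl) = (size tl).-1 by rewrite size_rem.
  case: (eqVneq t (- h)) => [Eth|Eth].
    have Hs' : csum (h :: tl) = csum (rem t tl) by rewrite Hsum Eth corootN subrr add0r.
    have [h' [tl' [H1 H2 H3 H4]]] := IH (rem t tl) (ltac:(rewrite Hsr; case: (size tl) Hsz => //= k; exact: ltnW)) Hrem (ltac:(by rewrite -Hs')).
    exists h', tl'; split => //; last by rewrite H3.
    apply: ltnW; apply: leq_trans H2 _; rewrite Hsr; exact: leq_pred.
  have [d Hd Hcd] := coroot_sum_step Hh HtP Eth Hneg.
  have Hs' : csum (h :: tl) = csum (d :: rem t tl) by rewrite Hsum /csum big_cons Hcd.
  have Hpos : (0 < size tl)%N by case: (tl) Ht.
  have Hsd : size (d :: rem t tl) = size tl by rewrite /= Hsr prednK.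
  have [h' [tl' [H1 H2 H3 H4]]] := IH (d :: rem t tl)
    (ltac:(by rewrite Hsd)) (ltac:(by rewrite /= Hd Hrem)) (ltac:(by rewrite -Hs')).
  exists h', tl'; split => //; last by rewrite H3.
  by rewrite Hsd in H2; rewrite /= ltnS ltnW.
exists h, tl; split => //=; first by rewrite Hh.
by move=> t Ht; move/hasPn: Hno => /(_ t Ht); rewrite -leNgt.
Qed.

End Lred.

Lemma subrACA' (V : zmodType) (a b c d : V) : (a - b) - (c - d) = (a - c) - (b - d).
Proof.
rewrite opprB addrACA [in RHS]opprB [in RHS]addrACA; congr (_ + _); exact: addrC.
Qed.

Lemma zid (V : zmodType) (a b c d e : V) : (a - (c - d)) - ((b - (c - e)) + (d - e)) = a - b.
Proof.
rewrite (opprD (b - (c - e))) addrA (subrACA' a (c - d) b (c - e)) (subrACA' c d c e) subrr add0r opprB.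
by rewrite subrK.
Qed.

Section KS.
Variables (R : realFieldType) (n : nat) (Phi : seq 'rV[R]_n)
    (alpha : 'I_n -> 'rV[R]_n) (amax : 'rV[R]_n) (x x' : 'rV[R]_n).
Hypothesis HR : is_root_system Phi.
Hypothesis HS : simple_roots Phi alpha.
Hypothesis HH : highest_root Phi alpha amax.
Hypothesis Hx : in_alcove alpha amax x.
Hypothesis Hx' : in_alcove alpha amax x'.
Local Notation V := 'rV[R]_n.
Local Notation dot := (@dot R n).
Local Notation coroot := (@coroot R n).
Local Notation refl := (@refl R n).
Local Notation wa := (@weyl_act R n).
Local Notation csum := (@csum R n).

Lemma KWr u : inPhi Phi u -> dot x (wa u x') <= dot x x'.
Proof.
move=> Hu; have [l Hl] := wa_word HR HS Hx Hu.
rewrite Hl; exact: (KW HR HS Hx (ltnSn _) Hx Hx').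
Qed.

Lemma dot_sq_sub (a b : V) : dot (a - b) (a - b) = dot a a + dot b b - (dot a b + dot a b).
Proof.
by rewrite dotBl !dotBr (dotC b a) opprB addrACA opprD.
Qed.

Lemma dot_add_sq (D c : V) f : dot (D + f *: c) (D + f *: c) = dot D D + f * (2 * dot D c + f * dot c c).
Proof.
rewrite dotDl !dotDr !dotZl !dotZr (dotC c D) mulr_natl mulr2n !mulrDr !addrA.
by rewrite mulrA.
Qed.

Lemma reflE' (a q : V) : refl a q = q - dot a q *: coroot a.
Proof. by rewrite /Defs.refl dot_corootl /coroot scalerA mulrC. Qed.

Lemma aff_refl_dist (h z : V) : h \in Phi -> 1 < dot h z ->
  dot (x - (refl h z + coroot h)) (x - (refl h z + coroot h)) < dot (x - z) (x - z).
Proof.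
move=> Hh Hz.
have Hhx : dot h x < 1 := alc_lt1 HH Hh Hx.
have HhP : 0 < dot h h by apply: dot_gt0; exact: (root_nz HR Hh).
set c := coroot h; set f := dot h z - 1.
have -> : x - (refl h z + c) = (x - z) + f *: c.
  rewrite reflE' /f scalerBl scale1r opprD addrA opprB.
  by rewrite -/c !addrA [x - z + _]addrAC.
rewrite dot_add_sq -[X in _ < X]addr0 ltrD2l.
have Hf : 0 < f by rewrite /f subr_gt0.
rewrite pmulr_rlt0 //.
set r := 2 / dot h h.
have Hr : 0 < r by rewrite divr_gt0.
have Hcc : dot c c = r * 2.
  by rewrite /c dot_corootl dotC dot_coroot_self // (root_nz HR Hh).
have HDc : dot (x - z) c = r * (dot h x - dot h z).
  by rewrite /c dot_corootr dotBl !(dotC _ h).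
rewrite Hcc HDc /f.
have -> : 2 * (r * (dot h x - dot h z)) + (dot h z - 1) * (r * 2)
        = 2 * (r * (dot h x - 1)).
  rewrite [(dot h z - 1) * _]mulrC [r * 2]mulrC -mulrA -mulrDr -mulrDr.
  by rewrite addrA subrK.
by rewrite pmulr_rlt0 // pmulr_rlt0 // subr_lt0.
Qed.

Lemma Kstar N : forall g u, (size g < N)%N -> inPhi Phi g -> inPhi Phi u ->
  dot (x - x') (x - x') <= dot (x - (wa u x' + csum g)) (x - (wa u x' + csum g)) /\
  (csum g != 0 -> dot (x - x') (x - x') < dot (x - (wa u x' + csum g)) (x - (wa u x' + csum g))).
Proof.
have base : forall u, inPhi Phi u -> dot (x - x') (x - x') <= dot (x - wa u x') (x - wa u x').
  move=> u Hu; rewrite !dot_sq_sub dot_wa ?(inPhi_nzl HR Hu) // lerD2l lerN2.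
  by apply: lerD; apply: KWr.
elim: N => // N IH g u Hsz Hg Hu.
case: (eqVneq (csum g) 0) => [E|Hnz].
  by rewrite E addr0; split => //; apply: base.
have [h [tl [Hhtl Hstl Hcs Hpos]]] := good_rep HR (ltnSn (size g)) Hg Hnz.
move: (Hhtl) => /andP [Hh Htl].
have H2 : 2 <= dot h (csum g).
  rewrite -Hcs /csum big_cons dotDr dotC dot_coroot_self ?(root_nz HR Hh) // lerDl.
  rewrite dot_sumr big_seq; apply: sumr_ge0 => t Ht; exact: Hpos.
have Hux : -1 < dot h (wa u x').
  rewrite dotC dot_wa_sym dotC; apply: (alc_abs HR HH _ Hx').
  by apply: wa_Phi => //; apply: inPhi_rev.
set z := wa u x' + csum g.
have Hz1 : 1 < dot h z.
  have <- : (-1 + 2 : R) = 1 by rewrite mulr2n addKr.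
  by rewrite /z dotDr; apply: ltr_leD.
pose g' := map (wa [:: h]) tl.
have Hz' : wa (h :: u) x' + csum g' = refl h z + coroot h.
  rewrite /z -Hcs /csum big_cons reflD reflD refl_coroot dotC dot_coroot_self ?(root_nz HR Hh) //.
  rewrite -/(csum tl) -/(csum g').
  have -> : refl h (csum tl) = csum g'.
    by rewrite /g' /csum -(wa_sum_coroot tl (s := [:: h])) //= (root_nz HR Hh).
  have -> : coroot h - 2 *: coroot h = - coroot h.
    by rewrite scaler_nat mulr2n opprD addrA subrr add0r.
  by rewrite (addrC (- coroot h)) addrA subrK.
have [IH1 _] := IH g' (h :: u) (ltac:(rewrite size_map; exact: leq_trans Hstl Hsz))
  (inPhi_map HR (s := [:: h]) (ltac:(by rewrite /inPhi /= Hh)) Htl) (ltac:(by rewrite /inPhi /= Hh; exact: Hu)).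
rewrite Hz' in IH1.
have Hlt := aff_refl_dist Hh Hz1.
have Hfin := le_lt_trans IH1 Hlt.
by split => //; apply: ltW.
Qed.

End KS.

Section Latt.
Variables (R : realFieldType) (n : nat) (Phi : seq 'rV[R]_n)
    (alpha : 'I_n -> 'rV[R]_n).
Hypothesis HR : is_root_system Phi.
Hypothesis HS : simple_roots Phi alpha.
Local Notation V := 'rV[R]_n.
Local Notation coroot := (@coroot R n).
Local Notation csum := (@csum R n).

Lemma csum_nseq (b : V) k : csum (nseq k b) = coroot b *+ k.
Proof.
elim: k => [|k IH]; first by rewrite /csum big_nil.
by rewrite /csum /= big_cons -/(csum _) IH mulrS.
Qed.

Lemma csum_cat g1 g2 : csum (g1 ++ g2) = csum g1 + csum g2.
Proof. by rewrite /csum big_cat. Qed.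

Lemma lattice_csum (e : 'I_n -> int) (r : seq 'I_n) :
  exists g, inPhi Phi g /\ csum g = \sum_(i <- r) coroot (alpha i) *~ e i.
Proof.
elim: r => [|i r [g [Hg Hcs]]]; first by exists [::]; rewrite /csum !big_nil.
have [g1 [Hg1 Hc1]] : exists g1, inPhi Phi g1 /\ csum g1 = coroot (alpha i) *~ e i.
  case: (e i) => [k|k].
    exists (nseq k (alpha i)); split; last by rewrite csum_nseq pmulrn.
    by apply/allP => a /nseqP [-> _]; apply: alpha_Phi.
  exists (nseq k.+1 (- alpha i)); split; last by rewrite csum_nseq corootN NegzE mulrNz -pmulrn mulNrn.
  by apply/allP => a /nseqP [-> _]; apply: neg_Phi => //; apply: alpha_Phi.
exists (g1 ++ g); split; first by rewrite /inPhi all_cat; apply/andP; split.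
by rewrite csum_cat big_cons Hc1 Hcs.
Qed.

End Latt.

Unset Implicit Arguments.

Theorem proposition4p5 (R : realFieldType) (n : nat) (Phi : seq 'rV[R]_n)
    (alpha : 'I_n -> 'rV[R]_n) (amax : 'rV[R]_n) :
  is_root_system Phi -> irreducible_rs Phi -> simple_roots Phi alpha ->
  highest_root Phi alpha amax ->
  forall lam mu : 'rV[R]_n,
    in_coroot_lattice alpha lam -> in_coroot_lattice alpha mu -> lam != mu ->
    forall y : 'rV[R]_n,
      ~ (in_X Phi alpha amax (y - lam) /\ in_X Phi alpha amax (y - mu)).
Proof.
move=> HR _ HS HH lam mu [k Hk] [k' Hk'] Hne y.
move=> [[w [s Hs Hws] [x Hx Ex]] [w' [s' Hs' Hws'] [x' Hx' Ex']]].
have Hsn : nzl s := inPhi_nzl HR Hs.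
have Hsn' : nzl (rev s) by rewrite /nzl all_rev.
have [g0 [Hg0 Hcs0]] := lattice_csum HR HS (fun i => k i - k' i) (index_enum 'I_n).
have Ediff : lam - mu = csum g0.
  rewrite Hcs0 Hk Hk' -sumrB; apply: eq_bigr => i _; by rewrite mulrzBr.
pose g := map (weyl_act (rev s)) g0.
have Hg : inPhi Phi g by apply: inPhi_map => //; apply: inPhi_rev.
pose u := rev s ++ s'.
have Hu : inPhi Phi u by rewrite /inPhi all_cat; apply/andP; split => //; apply: inPhi_rev.
have [_ Hstrict] := Kstar HR HS HH Hx Hx' (ltnSn (size g)) Hg Hu.
have Hcg : csum g = weyl_act (rev s) (lam - mu).
  by rewrite Ediff /csum wa_sum_coroot.
have Hwx : weyl_act s x = x - (y - lam) by rewrite Ex -Hws opprB addrC subrK.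
have Hwx' : weyl_act s' x' = x' - (y - mu) by rewrite Ex' -Hws' opprB addrC subrK.
have Key : x - (weyl_act u x' + csum g) = weyl_act (rev s) (x - x').
  rewrite Hcg /u wa_cat -waD -{1}(waK x Hsn) -waB; congr (weyl_act _ _).
  by rewrite Hwx Hwx' zid.
rewrite Key dot_wa // in Hstrict.
have Hz : csum g = 0.
  by apply/eqP; apply: contraT => /Hstrict; rewrite ltxx.
move: Hne; rewrite -subr_eq0 => /negP; apply.
by rewrite -(waKV (lam - mu) Hsn) -Hcg Hz wa0.
Qed.
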